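(* Let $d\ge 1$ be an integer and let ${\cal P}=\{\Pi_i,\pi_i\}_{i}$ be any (discrete) ensemble of pure states on ${\cal H}_d=\mathbb{C}^d$, where $\Pi_i=|\psi_i\rangle\langle\psi_i|$ with $\|\psi_i\|=1$, $\pi_i\ge 0$ and $\sum_i\pi_i=1$. Then the accessible fidelity of ${\cal P}$ satisfies $$F_{\cal P}\ge \frac{2}{d+1}.$$
   Context: For a measurement ${\cal E}=\{E_b\}$ (a POVM on ${\cal H}_d$: positive operators with $\sum_b E_b=I$) and a state-reproduction strategy ${\cal M}: b\mapsto\sigma_b$ (an assignment of a density operator $\sigma_b$ on ${\cal H}_d$ to each outcome $b$), the average fidelity is $F_{\cal P}({\cal E},{\cal M})=\sum_{b,i}\pi_i\,{\rm tr}(\Pi_iE_b)\,{\rm tr}(\Pi_i\sigma_b)$. The accessible fidelity of ${\cal P}$ is $F_{\cal P}=\sup_{{\cal E},{\cal M}}F_{\cal P}({\cal E},{\cal M})$, the supremum over all POVMs and all reproduction strategies. *)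

(* Defs.v *)
From HB Require Import structures.
From mathcomp Require Import all_boot all_order all_algebra.
From mathcomp Require Import all_classical all_reals all_analysis.
From mathcomp Require Import complex.
Set Implicit Arguments. Unset Strict Implicit. Unset Printing Implicit Defensive.
Import Order.TTheory GRing.Theory Num.Theory.
Local Open Scope ring_scope.

Section QDefs.
Variable R : realType.
Local Notation C := R[i].

Definition adj (m n : nat) (A : 'M[C]_(m, n)) : 'M[C]_(n, m) :=
  (map_mx (@conjc R) A)^T.

(* positive (semidefinite) operator on H_d = C^d: Hermitian with
   <v, A v> >= 0 for all v (the order on R[i] forces realness) *)
Definition posop (d : nat) (A : 'M[C]_d) : Prop :=
  adj A = A /\ forall v : 'cV[C]_d, 0 <= (adj v *m A *m v) 0 0.

Definition density (d : nat) (s : 'M[C]_d) : Prop :=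
  posop s /\ \tr s = 1.

Definition POVM (d n : nat) (E : 'I_n -> 'M[C]_d) : Prop :=
  (forall b, posop (E b)) /\ \sum_(b < n) E b = 1%:M.

Definition proj (d : nat) (psi : 'cV[C]_d) : 'M[C]_d := psi *m adj psi.

(* ensemble of pure states {Pi_i = |psi_i><psi_i|, pi_i}, i ranging over nat
   (discrete, possibly countably infinite; finite ensembles = pi_i = 0 eventually) *)
Definition ensemble (d : nat) (pi : nat -> R) (psi : nat -> 'cV[C]_d) : Prop :=
  (forall i, 0 <= pi i) /\
  (forall i, adj (psi i) *m psi i = 1%:M) /\
  (\sum_(i <oo) (pi i)%:E = 1)%E.

Definition fid_term (d n : nat) (pi : nat -> R) (psi : nat -> 'cV[C]_d)
  (E : 'I_n -> 'M[C]_d) (sigma : 'I_n -> 'M[C]_d) (i : nat) : R :=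
  pi i * complex.Re (\sum_(b < n) \tr (proj (psi i) *m E b) * \tr (proj (psi i) *m sigma b)).

(* average fidelity F_P(E, M) (extended real; the series has nonnegative terms) *)
Definition avg_fidelity (d n : nat) (pi : nat -> R) (psi : nat -> 'cV[C]_d)
  (E : 'I_n -> 'M[C]_d) (sigma : 'I_n -> 'M[C]_d) : \bar R :=
  (\sum_(i <oo) (fid_term pi psi E sigma i)%:E)%E.

Definition accessible_fidelity (d : nat) (pi : nat -> R) (psi : nat -> 'cV[C]_d) : \bar R :=
  ereal_sup [set x | exists (n : nat) (E : 'I_n -> 'M[C]_d) (sigma : 'I_n -> 'M[C]_d),
     POVM E /\ (forall b, density (sigma b)) /\ x = avg_fidelity pi psi E sigma].

End QDefs.

(* Main.v *)
Require Import Defs.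
From HB Require Import structures.
From mathcomp Require Import all_boot all_order all_algebra.
From mathcomp Require Import all_classical all_reals all_analysis.
From mathcomp Require Import complex.
From mathcomp Require Import zify ring lra.
Import Order.TTheory GRing.Theory Num.Theory.
Set Implicit Arguments. Unset Strict Implicit. Unset Printing Implicit Defensive.
Local Open Scope ring_scope.

Section Aux.
Variable R : realType.
Local Notation C := R[i].

Definition ii : C := Complex 0 1.
Arguments ii : simpl never.

Lemma ii2 : ii ^+ 2 = -1. Proof. exact: sqr_i. Qed.
Lemma ii4 : ii ^+ 4 = 1.
Proof. by rewrite (_ : 4 = 2 * 2)%N // exprM ii2 sqrrN expr1n. Qed.
Lemma iiJ : conjc ii = ii ^+ 3.
Proof. rewrite exprS ii2 mulrN1. by apply/eqP; rewrite eq_complex /= oppr0 !eqxx. Qed.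

Lemma iiXmod k : ii ^+ k = ii ^+ (k %% 4).
Proof. by rewrite {1}(divn_eq k 4) exprD mulnC exprM ii4 expr1n mul1r. Qed.

Lemma iiX_eq1 k : (ii ^+ k == 1) = (4 %| k)%N.
Proof.
rewrite iiXmod /dvdn; have : (k %% 4 < 4)%N by rewrite ltn_mod.
case: (k %% 4)%N => [|[|[|[|]]]] //= _.
- by rewrite expr0 eqxx.
- by rewrite expr1 eq_complex /= oner_eq0 andbF.
- by rewrite ii2 -subr_eq0 -opprD oppr_eq0 -mulr2n pnatr_eq0.
- rewrite exprS ii2 mulrN1 eq_complex /=.
  by rewrite oppr0 eq_sym oner_eq0.
Qed.

Lemma sum_root4 (x : C) : x ^+ 4 = 1 ->
  \sum_(a < 4) x ^+ a = if x == 1 then 4%:R else 0.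
Proof.
move=> x4; case: eqP => [->|/eqP nx1].
  by rewrite (eq_bigr (fun _ => 1)) ?sumr_const ?card_ord // => a _; rewrite expr1n.
have : (1 - x) * \sum_(a < 4) x ^+ a = 0.
  rewrite !big_ord_recr big_ord0 /= add0r.
  by transitivity (1 - x ^+ 4); [ring | rewrite x4 subrr].
by move/eqP; rewrite mulf_eq0 subr_eq0 eq_sym (negbTE nx1) /= => /eqP.
Qed.

Lemma sum_phase (N M : nat) : (N <= 2)%N -> (M <= 2)%N ->
  \sum_(a < 4) (ii ^+ N * conjc ii ^+ M) ^+ a = if N == M then 4%:R else 0.
Proof.
move=> hN hM; rewrite iiJ -exprM -exprD sum_root4; last first.
  by rewrite -exprM mulnC exprM ii4 expr1n.
rewrite iiX_eq1; congr (if _ then _ else _).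
apply/idP/eqP => [|->]; last by apply/dvdnP; exists M; lia.
move/dvdnP => [q hq]; lia.
Qed.


Lemma char_sum d (N M : 'I_d -> nat) :
  (forall p, N p <= 2)%N -> (forall p, M p <= 2)%N ->
  \sum_(th : {ffun 'I_d -> 'I_4}) \prod_(p < d) (ii ^+ N p * conjc ii ^+ M p) ^+ (th p)
  = if [forall p, N p == M p] then 4%:R ^+ d else 0.
Proof.
move=> hN hM.
rewrite -(bigA_distr_bigA (fun p (a : 'I_4) => (ii ^+ N p * conjc ii ^+ M p) ^+ a)) /=.
rewrite (eq_bigr (fun p => if N p == M p then 4%:R else 0)); last first.
  by move=> p _; rewrite sum_phase.
case: forallP => [h|/forallP]; last first.
  rewrite negb_forall => /existsP [p /negbTE hp].
  by rewrite (bigD1 p) //= hp mul0r.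
by rewrite (eq_bigr (fun _ => 4%:R)) ?prodr_const ?card_ord // => p _; rewrite h.
Qed.


Lemma xpow_prod d (x : C) (th : {ffun 'I_d -> 'I_4}) j :
  x ^+ th j = \prod_(p < d) x ^+ ((p == j) * th p).
Proof.
rewrite (bigD1 j) //= eqxx mul1n big1 ?mulr1 // => p /negbTE ->.
by rewrite mul0n expr0.
Qed.

Lemma mono4 d (th : {ffun 'I_d -> 'I_4}) (j k l m : 'I_d) :
  conjc ii ^+ th j * conjc ii ^+ th k * ii ^+ th l * ii ^+ th m =
  \prod_(p < d) (ii ^+ ((p == l) + (p == m)) * conjc ii ^+ ((p == j) + (p == k))) ^+ (th p).
Proof.
rewrite (xpow_prod _ th j) (xpow_prod _ th k) (xpow_prod _ th l) (xpow_prod _ th m).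
rewrite -!big_split /=; apply: eq_bigr => p _.
rewrite exprMn -!exprM !mulnDl !exprD; ring.
Qed.

Lemma mono2 d (th : {ffun 'I_d -> 'I_4}) (j k : 'I_d) :
  ii ^+ th j * conjc ii ^+ th k =
  \prod_(p < d) (ii ^+ (p == j) * conjc ii ^+ (p == k)) ^+ (th p).
Proof.
rewrite (xpow_prod _ th j) (xpow_prod _ th k).
rewrite -!big_split /=; apply: eq_bigr => p _.
by rewrite exprMn -!exprM.
Qed.

Lemma comb4 d (j k l m : 'I_d) :
  [forall p, ((p == l) + (p == m) == (p == j) + (p == k))%N] =
  ((l == j) && (m == k)) || ((l == k) && (m == j)).
Proof.
apply/forallP/idP => [h|].
  move: h; case: (eqVneq l m) => [<-|nlm] h.
    by have := h l; rewrite eqxx /=; case: (l == j); case: (l == k).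
  have hl := h l; have hm := h m.
  rewrite eqxx (negbTE nlm) in hl.
  rewrite eqxx [m == l]eq_sym (negbTE nlm) in hm.
  case: (eqVneq l j) => [elj|nlj].
    rewrite -elj [m == l]eq_sym (negbTE nlm) /= in hm *.
    by move: hm; case: (m == k).
  rewrite (negbTE nlj) /= in hl *.
  move: hl; case: (eqVneq l k) => [elk|] /= _; last by [].
  move: hm; rewrite -elk [m == l]eq_sym (negbTE nlm).
  by case: (m == j).
case/orP => /andP [/eqP -> /eqP ->] p; first by [].
by rewrite addnC.
Qed.


Lemma adjM m n p (A : 'M[C]_(m, n)) (B : 'M[C]_(n, p)) :
  adj (A *m B) = adj B *m adj A.
Proof.
apply/matrixP => i j; rewrite !mxE rmorph_sum; apply: eq_bigr => k _.
by rewrite !mxE rmorphM mulrC.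
Qed.

Lemma adjZ m n (c : C) (A : 'M[C]_(m, n)) : adj (c *: A) = conjc c *: adj A.
Proof. by apply/matrixP => i j; rewrite !mxE rmorphM. Qed.

Lemma adjK m n (A : 'M[C]_(m, n)) : adj (adj A) = A.
Proof. by apply/matrixP => i j; rewrite !mxE conjcK. Qed.

Lemma adj_proj n (y : 'cV[C]_n) : adj (Defs.proj y) = Defs.proj y.
Proof. by rewrite /Defs.proj adjM adjK. Qed.

Lemma adj11 n (u v : 'cV[C]_n) : (adj u *m v) 0 0 = conjc ((adj v *m u) 0 0).
Proof.
rewrite -[in LHS](adjK v) -adjM.
by rewrite /adj !mxE.
Qed.

Lemma mul11 m (A : 'M[C]_(1, m)) (B : 'M[C]_(m, 1)) (D : 'M[C]_1) :
  (A *m B *m D) 0 0 = (A *m B) 0 0 * D 0 0.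
Proof. by rewrite mxE big_ord1. Qed.

Lemma tr_proj n (x y : 'cV[C]_n) :
  \tr (Defs.proj x *m Defs.proj y) = conjc ((adj y *m x) 0 0) * (adj y *m x) 0 0.
Proof.
rewrite /Defs.proj mulmxA mxtrace_mulC !mulmxA trace_mx11.
by rewrite -mulmxA mul11 [(adj x *m y) 0 0]adj11 mulrC.
Qed.

Lemma posop_proj n (c : C) (y : 'cV[C]_n) : conjc c = c -> 0 <= c ->
  posop (c *: Defs.proj y).
Proof.
move=> cc c0; split; first by rewrite adjZ adj_proj cc.
move=> v; rewrite -scalemxAr -scalemxAl mxE; apply: mulr_ge0 => //.
by rewrite /Defs.proj (mulmxA (adj v)) -(mulmxA (adj v *m y)) mul11 [(adj y *m v) 0 0]adj11 mulcJ_ge0.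
Qed.


Lemma dsum1 d (F : 'I_d -> C) j : \sum_(k < d) (if j == k then F k else 0) = F j.
Proof.
rewrite (bigD1 j) //= eqxx big1 ?addr0 // => k.
by rewrite eq_sym => /negbTE ->.
Qed.

Lemma dsum2 d (F : 'I_d -> 'I_d -> C) j k :
  \sum_(l < d) \sum_(m < d) (if (l == j) && (m == k) then F l m else 0) = F j k.
Proof.
rewrite (bigD1 j) //= [X in _ + X]big1 ?addr0; last first.
  by move=> l hl; apply: big1 => m _; rewrite (negbTE hl).
rewrite eqxx /=; under eq_bigr => m _ do rewrite eq_sym.
exact: dsum1.
Qed.

Lemma sum_swap2 d (G : 'I_d -> 'I_d -> C) j k :
  \sum_(l < d) \sum_(m < d)
     (if ((l == j) && (m == k)) || ((l == k) && (m == j)) then G l m else 0)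
  = G j k + G k j - (if j == k then G j j else 0).
Proof.
case: (eqVneq j k) => [<-|njk].
  under eq_bigr => l _ do under eq_bigr => m _ do rewrite orbb.
  by rewrite dsum2 addrK.
rewrite subr0 -dsum2 -[G k j](dsum2 G k j) -big_split /=.
apply: eq_bigr => l _; rewrite -big_split /=; apply: eq_bigr => m _.
case: (eqVneq l j) => [->|] /=; case: (eqVneq m k) => [->|] /=;
  rewrite ?(negbTE njk) ?[k == j]eq_sym ?(negbTE njk) ?addr0 ?add0r //=.
Qed.

Lemma mulr_if0 (x y : C) (b : bool) : x * (if b then y else 0) = if b then x * y else 0.
Proof. by case: b; rewrite ?mulr0. Qed.


Definition sfun d (a : 'I_d -> C) (th : {ffun 'I_d -> 'I_4}) :=
  \sum_(k < d) conjc (ii ^+ th k) * a k.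

Lemma expand4 d (a : 'I_d -> C) th :
  (conjc (sfun a th) * sfun a th) ^+ 2 =
  \sum_(j < d) \sum_(k < d) \sum_(l < d) \sum_(m < d)
    (a j * a k * conjc (a l) * conjc (a m)) *
    (conjc ii ^+ th j * conjc ii ^+ th k * ii ^+ th l * ii ^+ th m).
Proof.
have e1 : conjc (sfun a th) = \sum_(l < d) ii ^+ th l * conjc (a l).
  by rewrite /sfun rmorph_sum; apply: eq_bigr => l _; by rewrite rmorphM /= conjcK.
have -> : (conjc (sfun a th) * sfun a th) ^+ 2 =
   (sfun a th * sfun a th) * (conjc (sfun a th) * conjc (sfun a th)) by ring.
rewrite e1 /sfun !big_distrlr; apply: eq_bigr => j _.
under eq_bigr => l _ do rewrite big_distrlr.
rewrite exchange_big; apply: eq_bigr => k _; apply: eq_bigr => l _.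
apply: eq_bigr => m _.
rewrite /= !rmorphXn; ring.
Qed.


Lemma char4 d (j k l m : 'I_d) :
  \sum_(th : {ffun 'I_d -> 'I_4})
    (conjc ii ^+ th j * conjc ii ^+ th k * ii ^+ th l * ii ^+ th m) =
  if ((l == j) && (m == k)) || ((l == k) && (m == j)) then 4%:R ^+ d else 0.
Proof.
rewrite (eq_bigr _ (fun th _ => mono4 th j k l m)) char_sum ?comb4 // => p.
  by case: (p == l); case: (p == m).
by case: (p == j); case: (p == k).
Qed.

Lemma fourth d (a : 'I_d -> C) :
  \sum_(th : {ffun 'I_d -> 'I_4}) (conjc (sfun a th) * sfun a th) ^+ 2 =
  4%:R ^+ d * (2%:R * (\sum_(k < d) conjc (a k) * a k) ^+ 2
               - \sum_(k < d) (conjc (a k) * a k) ^+ 2).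
Proof.
set K : C := 4%:R ^+ d.
under eq_bigr => th _ do rewrite expand4.
rewrite exchange_big; under eq_bigr => j _ do
  (rewrite exchange_big; under eq_bigr => k _ do
    (rewrite exchange_big; under eq_bigr => l _ do
       (rewrite exchange_big; under eq_bigr => m _ do
          rewrite -mulr_sumr char4 -/K mulr_if0))).
under eq_bigr => j _ do under eq_bigr => k _ do
  rewrite (sum_swap2 (fun l m => a j * a k * conjc (a l) * conjc (a m) * K)).
rewrite /=.
under eq_bigr => j _ do rewrite sumrB big_split /=.
rewrite sumrB big_split /=.
under [X in _ - X]eq_bigr => j _ do
  rewrite (dsum1 (fun k => a j * a k * conjc (a j) * conjc (a j) * K)).
have S2 : forall (F : 'I_d -> 'I_d -> C), (forall j k, F j k = K * ((conjc (a j) * a j) * (conjc (a k) * a k))) ->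
   \sum_(j < d) \sum_(k < d) F j k = K * (\sum_(k < d) conjc (a k) * a k) ^+ 2.
  move=> F hF; rewrite expr2 big_distrlr mulr_sumr; apply: eq_bigr => j _.
  by rewrite mulr_sumr; apply: eq_bigr => k _; rewrite hF.
rewrite !S2; last 2 first.
- by move=> j k; ring.
- by move=> j k; ring.
have -> : \sum_(j < d) a j * a j * conjc (a j) * conjc (a j) * K =
  K * \sum_(k < d) (conjc (a k) * a k) ^+ 2.
  by rewrite mulr_sumr; apply: eq_bigr => j _; ring.
ring.
Qed.


Definition ev d (j : 'I_d) : 'cV[C]_d := delta_mx j 0.
Definition yv d (th : {ffun 'I_d -> 'I_4}) : 'cV[C]_d := \col_k ii ^+ th k.

Lemma ev_s d (j : 'I_d) (x : 'cV[C]_d) : (adj (ev j) *m x) 0 0 = x j 0.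
Proof.
rewrite mxE (bigD1 j) //= big1 ?addr0.
  by rewrite !mxE !eqxx andbT rmorph_nat mul1r.
by move=> k nkj; rewrite !mxE (negbTE nkj) rmorph_nat mul0r.
Qed.

Lemma yv_s d th (x : 'cV[C]_d) : (adj (yv th) *m x) 0 0 = sfun (fun k => x k 0) th.
Proof. by rewrite mxE; apply: eq_bigr => k _; rewrite !mxE. Qed.

Lemma sum_ev d : \sum_(j < d) Defs.proj (ev j) = 1%:M.
Proof.
apply/matrixP => p q; rewrite summxE !mxE.
under eq_bigr => j _ do rewrite !mxE big_ord1 !mxE /= rmorph_nat.
rewrite (bigD1 p) //= big1 ?addr0; last first.
  by move=> j njp; rewrite eq_sym (negbTE njp) /= mul0r.
by rewrite eqxx /= mul1r [q == p]eq_sym; case: (p == q).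
Qed.

Lemma sum_yv d : \sum_(th : {ffun 'I_d -> 'I_4}) Defs.proj (yv th) = (4%:R ^+ d)%:M.
Proof.
apply/matrixP => p q; rewrite summxE !mxE.
under eq_bigr => th _ do rewrite !mxE big_ord1 !mxE rmorphXn /= mono2.
rewrite char_sum; last 2 first.
- by move=> r; case: (r == p).
- by move=> r; case: (r == q).
have -> : [forall r, ((r == p) : nat) == (r == q)] = (p == q).
  apply/forallP/eqP => [h|->] //.
  move: (h p); rewrite eqxx => hb; apply/eqP; move: hb; by case: (p == q).
by case: (p == q); rewrite /= ?mulr1n ?mulr0n.
Qed.


Notation Tt d := ('I_d + {ffun 'I_d -> 'I_4})%type.

Definition cE d : C := (d%:R + 1)^-1.
Definition cY d : C := d%:R / (d%:R + 1) / 4%:R ^+ d.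

Definition Eg d (t : Tt d) : 'M[C]_d :=
  match t with
  | inl j => cE d *: Defs.proj (ev j)
  | inr th => cY d *: Defs.proj (yv th)
  end.

Definition Sg d (t : Tt d) : 'M[C]_d :=
  match t with
  | inl j => 1 *: Defs.proj (ev j)
  | inr th => (d%:R)^-1 *: Defs.proj (yv th)
  end.

Lemma cE_ge0 d : 0 <= cE d.
Proof. by rewrite /cE invr_ge0 addr_ge0 ?ler0n. Qed.
Lemma cY_ge0 d : 0 <= cY d.
Proof. by rewrite /cY !divr_ge0 ?exprn_ge0 ?addr_ge0 ?ler0n. Qed.
Lemma cE_real d : conjc (cE d) = cE d.
Proof. by rewrite /cE fmorphV rmorphD rmorph_nat rmorph1. Qed.
Lemma cY_real d : conjc (cY d) = cY d.
Proof. by rewrite /cY !rmorphM !fmorphV rmorphD rmorphXn !rmorph_nat rmorph1. Qed.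
Lemma cD_real d : conjc ((d%:R)^-1 : C) = (d%:R)^-1.
Proof. by rewrite fmorphV rmorph_nat. Qed.

Lemma povm_E d : POVM (fun b : 'I_#|{: Tt d}| => Eg (enum_val b)).
Proof.
split.
  move=> b; case: (enum_val b) => [j|th] /=.
    by apply: posop_proj; [exact: cE_real | exact: cE_ge0].
  by apply: posop_proj; [exact: cY_real | exact: cY_ge0].
rewrite -(big_enum_val (fun t : Tt d => Eg t)) big_sumType /=.
rewrite -!scaler_sumr sum_ev sum_yv.
apply/matrixP => p q; rewrite !mxE; case: (p == q); rewrite /= ?mulr0n ?mulr1n ?mulr0 ?addr0 //.
have h1 : (d%:R + 1 : C) != 0 by rewrite natr1 pnatr_eq0.
have h4 : (4%:R ^+ d : C) != 0 by rewrite expf_neq0 // pnatr_eq0.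
rewrite /cE /cY; field; by rewrite h1 h4.
Qed.


Lemma tr_self n (y : 'cV[C]_n) : \tr (Defs.proj y) = (adj y *m y) 0 0.
Proof. by rewrite /Defs.proj mxtrace_mulC trace_mx11. Qed.

Lemma iiJii n : conjc (ii ^+ n) * ii ^+ n = 1.
Proof. have e : conjc (ii ^+ n) = conjc ii ^+ n by exact: rmorphXn.
by rewrite e -exprMn iiJ -exprSr ii4 expr1n. Qed.

Lemma dens_S d : (0 < d)%N -> forall b : 'I_#|{: Tt d}|, density (Sg (enum_val b)).
Proof.
move=> hd b; have hd0 : (d%:R : C) != 0 by rewrite pnatr_eq0 -lt0n.
case: (enum_val b) => [j|th] /=; split.
- by apply: posop_proj; rewrite ?rmorph1 ?ler01.
- by rewrite mxtraceZ tr_self ev_s mul1r mxE !eqxx.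
- by apply: posop_proj; rewrite ?cD_real // invr_ge0 ler0n.
- rewrite mxtraceZ tr_self yv_s /sfun.
  under eq_bigr => k _ do rewrite mxE iiJii.
  by rewrite sumr_const card_ord mulVf.
Qed.

Lemma tr_scale n (x y : 'cV[C]_n) (c : C) :
  \tr (Defs.proj x *m (c *: Defs.proj y)) = c * (conjc ((adj y *m x) 0 0) * (adj y *m x) 0 0).
Proof. by rewrite -scalemxAr mxtraceZ tr_proj. Qed.

Lemma fid_state d (psi : 'cV[C]_d) : (0 < d)%N -> adj psi *m psi = 1%:M ->
  \sum_(b < #|{: Tt d}|) \tr (Defs.proj psi *m Eg (enum_val b)) *
                         \tr (Defs.proj psi *m Sg (enum_val b)) = 2%:R / (d%:R + 1).
Proof.
move=> hd hu.
have hd0 : (d%:R : C) != 0 by rewrite pnatr_eq0 -lt0n.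
have h1 : (d%:R + 1 : C) != 0 by rewrite natr1 pnatr_eq0.
have h4 : (4%:R ^+ d : C) != 0 by rewrite expf_neq0 // pnatr_eq0.
set a := fun k => psi k 0.
have hS : \sum_(k < d) conjc (a k) * a k = 1.
  have := congr1 (fun M : 'M[C]_1 => M 0 0) hu; rewrite !mxE eqxx => h; rewrite -[RHS]h.
  by apply: eq_bigr => k _; rewrite !mxE.
transitivity (\sum_(t in {: Tt d})
   \tr (Defs.proj psi *m Eg t) * \tr (Defs.proj psi *m Sg t)).
  by rewrite [RHS]big_enum_val.
rewrite big_sumType /= /Eg /Sg.
under eq_bigr => j _ do rewrite !tr_scale !ev_s.
under [X in _ + X]eq_bigr => th _ do rewrite !tr_scale !yv_s -/a.
have -> : \sum_(th : {ffun 'I_d -> 'I_4})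
   cY d * (conjc (sfun a th) * sfun a th) * ((d%:R)^-1 * (conjc (sfun a th) * sfun a th))
   = cY d * (d%:R)^-1 * \sum_(th : {ffun 'I_d -> 'I_4}) (conjc (sfun a th) * sfun a th) ^+ 2.
  by rewrite mulr_sumr; apply: eq_bigr => th _; ring.
rewrite fourth hS.
have -> : \sum_(j < d) cE d * (conjc (psi j 0) * psi j 0) * (1 * (conjc (psi j 0) * psi j 0))
   = cE d * \sum_(k < d) (conjc (a k) * a k) ^+ 2.
  by rewrite mulr_sumr; apply: eq_bigr => j _; rewrite /a; ring.
set SA := \sum_(k < d) _.
rewrite /cE /cY; field.
by rewrite h1 h4 hd0.
Qed.

End Aux.

Unset Implicit Arguments.

Theorem theorem1 (R : realType) (d : nat) (hd : (0 < d)%N)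
  (pi : nat -> R) (psi : nat -> 'cV[R[i]]_d) :
  ensemble pi psi ->
  ((2 / (d%:R + 1) : R)%:E <= accessible_fidelity pi psi)%E.
Proof.
move=> [hpi [hu hsum]].
pose E := fun b : 'I_#|{: ('I_d + {ffun 'I_d -> 'I_4})%type}| => Eg R (enum_val b).
pose S := fun b : 'I_#|{: ('I_d + {ffun 'I_d -> 'I_4})%type}| => Sg R (enum_val b).
apply: ereal_sup_ubound.
exists #|{: ('I_d + {ffun 'I_d -> 'I_4})%type}|, E, S.
split; first exact: povm_E.
split; first exact: dens_S.
have hc : forall i, fid_term pi psi E S i = (2 / (d%:R + 1)) * pi i.
  move=> i; rewrite /fid_term /E /S fid_state //.
  have -> : (2%:R / (d%:R + 1) : R[i]) = (((2 / (d%:R + 1) : R))%:C)%C.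
    by rewrite rmorphM fmorphV !rmorphD !rmorph1 rmorph_nat.
  by rewrite /=; exact: mulrC.
rewrite /avg_fidelity (eq_eseriesr (g := fun i => ((2 / (d%:R + 1))%:E * (pi i)%:E)%E)).
  by rewrite nneseriesZl ?hsum ?mule1 // => i _; rewrite lee_fin.
by move=> i _; rewrite hc EFinM.
Qed.
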